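(* Let $0<\delta<1$ and let $Z=(Z_1,\dots,Z_k)$ be, given the database $X=(X_1,\dots,X_n)$, $k$ i.i.d. draws from the smoothed histogram density $\hat f_{m,\delta}(x)=(1-\delta)\hat f_m(x)+\delta$ on $[0,1]^r$. If $$k\log\Big(\frac{(1-\delta)m}{n\delta}+1\Big)\le\alpha,$$ then the resulting mechanism $Q_n(\cdot\mid X)$ satisfies $\alpha$-differential privacy.
   Context: Let $r\ge 1$ and $\mathcal X=[0,1]^r$. A database is $x=(x_1,\dots,x_n)\in\mathcal X^n$; the Hamming distance is $\delta(x,y)=\#\{i:x_i\ne y_i\}$. A data release mechanism is a Markov kernel $Q_n(\cdot\mid X=x)$ on $\mathcal X^k$; for $\alpha\ge0$ it satisfies $\alpha$-differential privacy if $Q_n(B\mid X=x)\le e^{\alpha}Q_n(B\mid X=y)$ for all measurable $B\subseteq\mathcal X^k$ and all $x,y$ with $\delta(x,y)=1$. Histogram: let $0<h<1$ be a binwidth with $m=h^{-r}$ an integer, and partition $[0,1]^r$ into $m$ cubes $B_1,\dots,B_m$ of side $h$. Let $C_j=\sum_{i=1}^n I(X_i\in B_j)$, $\hat p_j=C_j/n$, and $\hat f_m(x)=\sum_{j=1}^m (\hat p_j/h^r)I(x\in B_j)$. *)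

(* Defs.v *)
From HB Require Import structures.
From mathcomp Require Import all_boot all_order all_algebra.
From mathcomp Require Import all_classical all_reals all_analysis.
Set Implicit Arguments. Unset Strict Implicit. Unset Printing Implicit Defensive.
Import Order.TTheory GRing.Theory Num.Theory.
Local Open Scope ring_scope.

Section Defs.
Variable R : realType.

Definition in_unit_cube (r : nat) (z : r.-tuple R) : bool :=
  [forall j : 'I_r, (0 <= tnth z j) && (tnth z j <= 1)].

Definition is_database (r n : nat) (x : n.-tuple (r.-tuple R)) : Prop :=
  forall i : 'I_n, in_unit_cube (tnth x i).

Definition hamming (T : eqType) (n : nat) (x y : n.-tuple T) : nat :=
  #|[pred i : 'I_n | tnth x i != tnth y i]|.

(* The partition of [0,1]^r into the N^r cubes of side h = 1/N, indexed by
   c : 'I_r -> 'I_N.  Cube B_c = prod_j [c_j h, (c_j+1) h), where the last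
   cube in each coordinate is closed on the right so that the cubes
   partition [0,1]^r. *)
Definition in_bin (r N : nat) (h : R) (c : {ffun 'I_r -> 'I_N})
    (z : r.-tuple R) : bool :=
  [forall j : 'I_r,
     ((c j)%:R * h <= tnth z j) &&
     ((tnth z j < (c j).+1%:R * h) || ((val (c j) == N.-1) && (tnth z j == 1)))].

Definition bin_count (r n N : nat) (h : R) (x : n.-tuple (r.-tuple R))
    (c : {ffun 'I_r -> 'I_N}) : nat :=
  #|[pred i : 'I_n | in_bin h c (tnth x i)]|.

Definition histogram (r n N : nat) (h : R) (x : n.-tuple (r.-tuple R))
    (z : r.-tuple R) : R :=
  \sum_(c : {ffun 'I_r -> 'I_N})
     ((bin_count h x c)%:R / n%:R) / h ^+ r * (in_bin h c z)%:R.

Definition smoothed_histogram (r n N : nat) (h delta : R)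
    (x : n.-tuple (r.-tuple R)) (z : r.-tuple R) : R :=
  if in_unit_cube z then (1 - delta) * histogram N h x z + delta else 0.

End Defs.

Local Open Scope ereal_scope.
Local Open Scope classical_set_scope.

(* lam is Lebesgue measure on R^r (with the product Borel sigma-algebra on
   r.-tuple R): it gives every box prod_j [a_j,b_j] its volume.  This
   determines lam uniquely. *)
Definition is_lebesgue_tuple (R : realType) (r : nat)
    (lam : {measure set (r.-tuple R) -> \bar R}) : Prop :=
  forall a b : 'I_r -> R, (forall j, (a j <= b j)%R) ->
    lam [set z : r.-tuple R | forall j, (a j <= tnth z j <= b j)%R] =
    (\prod_(j < r) (b j - a j))%:E.

(* Main.v *)
Require Import Defs.
From HB Require Import structures.
From mathcomp Require Import all_boot all_order all_algebra.
From mathcomp Require Import all_classical all_reals all_analysis.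
From mathcomp Require Import zify ring lra.
Import Order.TTheory GRing.Theory Num.Theory.
Local Open Scope ring_scope.
Local Open Scope classical_set_scope.


Section semiring_alias.
Variables (U : pointedType) (G : set (set U)).
Hypotheses (G0 : G set0) (GI : setI_closed G) (GD : semi_setD_closed G).

Definition galias : Type := U.
HB.instance Definition _ := Pointed.on galias.
HB.instance Definition _ := @isSemiRingOfSets.Build default_measure_display galias G G0 GI GD.

Lemma setring_decomp (A : set U) : <<r G>> A ->
  exists D : set (set U), [/\ A = \bigcup_(X in D) X, forall X, D X -> G X,
    finite_set D & trivIset D id].
Proof.
move=> GA.
have : (@measurable _ (SetRing.type galias)) A by exact: GA.
rewrite SetRing.ring_measurableE => -[B [-> Bm Bfin Btriv]].
by exists B; split.
Qed.
End semiring_alias.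
Section rects.
Context d (T : measurableType d) (k : nat).

Definition rect (B : 'I_k -> set T) : set (k.-tuple T) :=
  [set z | forall i, B i (tnth z i)].

Definition rects : set (set (k.-tuple T)) :=
  [set A | A = set0 \/ exists B, (forall i, measurable (B i)) /\ A = rect B].

Lemma rects0 : rects set0. Proof. by left. Qed.

Lemma rectsI : setI_closed rects.
Proof.
move=> A A' [->|[B [mB ->]]]; first by rewrite set0I => _; left.
move=> [->|[B' [mB' ->]]]; first by rewrite setI0; left.
right; exists (fun i => B i `&` B' i); split.
  by move=> i; apply: measurableI.
by apply/seteqP; split => z /=; [move=> [h1 h2] i; split|move=> h; split => i; case: (h i)].
Qed.

Lemma rectsD : semi_setD_closed rects.
Proof.
move=> A A' [->|[B [mB ->]]].
  move=> _; exists set0; split.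
  - exact: finite_set0.
  - by [].
  - by rewrite set0D bigcup_set0.
  - by move=> ? ? [].
move=> [->|[B' [mB' ->]]].
  exists [set rect B]; split; [exact: finite_set1| |by rewrite setD0 bigcup_set1|].
    by move=> X ->; right; exists B.
  by move=> X Y -> ->.
pose F (j : 'I_k) := rect (fun i => if (i < j)%N then B i `&` B' i
  else if i == j then B i `\` B' i else B i).
have mF j : rects (F j).
  right; eexists; split; last reflexivity.
  move=> i /=; case: (i < j)%N; first exact: measurableI.
  by case: (i == j) => //; exact: measurableD.
exists (F @` setT); split.
- exact/finite_image/finite_finset.
- by move=> X [j _ <-].
- rewrite bigcup_image; apply/seteqP; split.
    move=> z [zB zB']. 
    have [j nj] : exists j, ~ B' j (tnth z j).
      by apply/existsNP => h; apply: zB'.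
    pose P := fun n : nat => `[< exists2 i : 'I_k, val i = n & ~ B' i (tnth z i) >].
    have exP : exists n, P n by exists (val j); apply/asboolP; exists j.
    case: (ex_minnP exP) => m /asboolP [i0 i0m ni0] minm.
    exists i0 => // i; case: ifPn => [ii0|].
      split; first exact: zB.
      apply: contrapT => nBi.
      have : (m <= val i)%N by apply: minm; apply/asboolP; exists i.
      by rewrite -i0m leqNgt ii0.
    case: ifPn => [/eqP -> _|_ _]; last exact: zB.
    by split; [exact: zB|].
  move=> z [j _ Fz]; split.
    move=> i; move: (Fz i); case: ifP => _; first by case.
    by case: ifP => _ //; case.
  move=> zB'; move: (Fz j); rewrite ltnn eqxx; case => _; apply; exact: zB'.
- move=> X Y [j _ <-] [j' _ <-] [z [Fjz Fj'z]]; congr F.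
  apply/val_inj/eqP; case: (ltngtP j j') => // jj'.
    by move: (Fj'z j) (Fjz j); rewrite jj' ltnn eqxx => -[_ ?] [].
  by move: (Fjz j') (Fj'z j'); rewrite jj' ltnn eqxx => -[_ ?] [].
Qed.

Lemma rect_measurable B : (forall i, measurable (B i)) -> measurable (rect B).
Proof.
move=> mB.
have -> : rect B = \bigcap_(i in [set: 'I_k]) ((fun z : k.-tuple T => tnth z i) @^-1` B i).
  by apply/seteqP; split => z /=; [move=> h i _|move=> h i; apply: h].
apply: fin_bigcap_measurable; first exact: finite_finset.
move=> i _; rewrite -[X in measurable X]setTI.
exact: (@measurable_tnth _ T k i).
Qed.

Lemma rects_measurable A : rects A -> measurable A.
Proof. by move=> [->|[B [mB ->]]]; [exact: measurable0|exact: rect_measurable]. Qed.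

Lemma measurable_rects A : measurable A -> <<sr <<r rects>> >> A.
Proof.
move=> mA.
have HT : <<sr <<r rects>> >> setT.
  apply: sub_g_sigma_ring; apply: sub_setring; right; exists (fun=> setT); split => //.
  by apply/seteqP; split.
have sH : sigma_algebra setT <<sr <<r rects>> >>.
  have [H0 HD HU] := smallest_sigma_ring (<<r rects>>).
  split => //; by move=> B HB; apply: HD.
move: mA; rewrite /measurable /=.
apply: smallest_sub => // X.
rewrite -bigcup_seq => -[i _ [Y mY <-]].
apply: sub_g_sigma_ring; apply: sub_setring; right.
exists (fun i' => if i' == i then Y else setT); split.
  by move=> i'; case: ifP.
apply/seteqP; split => z /=.
  by move=> [_ zY] i'; case: ifP => // /eqP ->.
by move=> h; split => //; move: (h i); rewrite eqxx.
Qed.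

End rects.
Arguments rect {d T k}.
Arguments rects_measurable {d T k}.
Arguments measurable_rects {d T k}.

Section rect_ineq.
Context d (T : measurableType d) (k : nat) (R : realType).
Local Open Scope ereal_scope.

Lemma rect_ineq (mu nu : {measure set (k.-tuple T) -> \bar R}) :
  nu setT < +oo ->
  (forall B, (forall i, measurable (B i)) -> mu (rect B) <= nu (rect B)) ->
  forall A, measurable A -> mu A <= nu A.
Proof.
move=> nuT hB.
pose C := [set A : set (k.-tuple T) | measurable A /\ mu A <= nu A].
have mC : monotone C.
  split.
  - move=> F ndF CF.
    have mF i : measurable (F i) by case: (CF i).
    have mU : measurable (\bigcup_i F i) by exact: bigcupT_measurable.
    split => //; have h1 := nondecreasing_cvg_mu (mu:=mu) mF mU ndF; have h2 := nondecreasing_cvg_mu (mu:=nu) mF mU ndF.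
    by apply: (lee_cvg_to h1 h2); apply: nearW => n /=; case: (CF n).
  - move=> F niF CF.
    have mF i : measurable (F i) by case: (CF i).
    have mI : measurable (\bigcap_i F i) by exact: bigcapT_measurable.
    have nuF0 : nu (F 0%N) < +oo.
      by apply: le_lt_trans nuT; apply: le_measure; rewrite ?inE //; exact: measurableT.
    have muF0 : mu (F 0%N) < +oo by apply: le_lt_trans nuF0; case: (CF 0%N).
    split => //; have h1 := nonincreasing_cvg_mu muF0 mF mI niF; have h2 := nonincreasing_cvg_mu nuF0 mF mI niF.
    by apply: (lee_cvg_to h1 h2); apply: nearW => n /=; case: (CF n).
have rC : <<r @rects _ T k>> `<=` C.
  move=> A /(@setring_decomp _ _ (@rects0 _ T k) (@rectsI _ T k) (@rectsD _ T k)).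
  move=> [D [-> DG Dfin Dtriv]].
  have mD X : D X -> measurable X by move=> /DG /rects_measurable.
  split; first exact: fin_bigcup_measurable.
  rewrite !measure_fin_bigcup //; apply: lee_fsum => // X /DG.
  case=> [->|[B [mB ->]]]; first by rewrite !measure0.
  exact: hB.
move=> A /measurable_rects HA.
by have [] := monotone_setring_sub_g_sigma_ring mC (smallest_setring _) rC HA.
Qed.
End rect_ineq.


Section hist.
Context (R : realType) (r n N : nat) (h : R).
Hypothesis h0 : 0 < h.

Lemma in_bin_uniq (c c' : {ffun 'I_r -> 'I_N}) (z : r.-tuple R) :
  in_bin h c z -> in_bin h c' z -> c = c'.
Proof.
have key (a b : 'I_N) (t : R) : (a < b)%N ->
    (a%:R * h <= t) && ((t < a.+1%:R * h) || ((val a == N.-1) && (t == 1))) ->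
    (b%:R * h <= t) && ((t < b.+1%:R * h) || ((val b == N.-1) && (t == 1))) -> False.
  move=> ab /andP[_ H1] /andP[H2 _].
  have : a.+1%:R * h <= t.
    by apply: le_trans H2; rewrite ler_pM2r // ler_nat.
  move=> H3; move: H1; rewrite ltNge H3 /= => /andP[/eqP aN _].
  have := ltn_ord b; move: ab; rewrite aN; lia.
move=> /forallP Hc /forallP Hc'; apply/ffunP => j.
apply/val_inj/eqP; case: (ltngtP (c j) (c' j)) => // ab.
  by case: (key _ _ _ ab (Hc j) (Hc' j)).
by case: (key _ _ _ ab (Hc' j) (Hc j)).
Qed.

Lemma hist_cases (z : r.-tuple R) :
  (exists c0 : {ffun 'I_r -> 'I_N}, in_bin h c0 z /\
    forall x : n.-tuple (r.-tuple R), histogram N h x z =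
     ((bin_count h x c0)%:R / n%:R) / h ^+ r) \/
  (forall x : n.-tuple (r.-tuple R), histogram N h x z = 0).
Proof.
rewrite /histogram.
have [[c0 Hc0]|none] := pselect (exists c0 : {ffun 'I_r -> 'I_N}, in_bin h c0 z).
  left; exists c0; split => // x.
  rewrite (bigD1 c0) //= Hc0 mulr1 big1 ?addr0 // => c cc0.
  case Hc: (in_bin h c z); last by rewrite mulr0.
  by rewrite (@in_bin_uniq c c0 z Hc Hc0) eqxx in cc0.
right => x.
rewrite big1 // => c _; case Hc: (in_bin h c z); last by rewrite mulr0.
by exfalso; apply: none; exists c.
Qed.

End hist.

Section counts.
Context (R : realType) (r n N : nat) (h : R).

Lemma count_le_n (x : n.-tuple (r.-tuple R)) (c : {ffun 'I_r -> 'I_N}) :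
  (bin_count h x c <= n)%N.
Proof. by rewrite /bin_count; apply: leq_trans (max_card _) _; rewrite card_ord. Qed.

Lemma hamming1 (x y : n.-tuple (r.-tuple R)) : hamming x y = 1%N ->
  exists i0 : 'I_n, forall i, i != i0 -> tnth x i = tnth y i.
Proof.
rewrite /hamming => H.
have : (0 < #|[pred i : 'I_n | tnth x i != tnth y i]|)%N by rewrite H.
move=> /card_gt0P [i0 Hi0]; exists i0 => i ii0.
apply/eqP; apply: contraNT ii0 => Hi.
have := cardD1 i0 [pred i : 'I_n | tnth x i != tnth y i].
rewrite Hi0 H => /eqP; rewrite eqSS eq_sym => /eqP/card0_eq/(_ i).
by rewrite !inE Hi andbT => /negbT; rewrite negbK.
Qed.

Lemma count_le (x y : n.-tuple (r.-tuple R)) (c : {ffun 'I_r -> 'I_N}) :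
  hamming x y = 1%N -> (bin_count h x c <= (bin_count h y c).+1)%N.
Proof.
move=> /hamming1 [i0 Hi0]; rewrite /bin_count.
rewrite (cardD1 i0) -add1n leq_add //; first by case: (_ \in _).
apply: subset_leq_card; apply/fintype.subsetP => i; rewrite !inE => /andP[ii0 Hi].
by rewrite -(Hi0 _ ii0).
Qed.

End counts.


Section smooth.
Context (R : realType) (r n N m : nat) (h delta : R).
Hypotheses (h0 : 0 < h) (hm : m%:R = h ^- r) (d0 : 0 < delta) (d1 : delta < 1).

Let sm (x : n.-tuple (r.-tuple R)) z := smoothed_histogram N h delta x z.

Lemma hval (x : n.-tuple (r.-tuple R)) (c : {ffun 'I_r -> 'I_N}) :
  ((bin_count h x c)%:R / n%:R) / h ^+ r = (bin_count h x c)%:R / n%:R * m%:R.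
Proof. by rewrite hm. Qed.

Lemma frac_ge0 (x : n.-tuple (r.-tuple R)) (c : {ffun 'I_r -> 'I_N}) :
  0 <= (bin_count h x c)%:R / n%:R :> R.
Proof. by rewrite divr_ge0. Qed.

Lemma frac_le1 (x : n.-tuple (r.-tuple R)) (c : {ffun 'I_r -> 'I_N}) :
  (bin_count h x c)%:R / n%:R <= 1 :> R.
Proof.
case: n x c => [|n'] x c; first by rewrite invr0 mulr0.
by rewrite ler_pdivrMr ?ltr0n // mul1r ler_nat count_le_n.
Qed.

Lemma hist_ge0 (x : n.-tuple (r.-tuple R)) z : 0 <= histogram N h x z.
Proof.
case: (@hist_cases R r n N h h0 z) => [[c0 [_ ->]]|->] //.
by rewrite hval mulr_ge0 ?frac_ge0.
Qed.

Lemma hist_le (x : n.-tuple (r.-tuple R)) z : histogram N h x z <= m%:R.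
Proof.
case: (@hist_cases R r n N h h0 z) => [[c0 [_ ->]]|->] //.
by rewrite hval ler_piMl ?frac_le1.
Qed.

Lemma sm_ge0 x z : 0 <= sm x z.
Proof.
rewrite /sm /smoothed_histogram; case: ifP => // _.
by rewrite addr_ge0 ?mulr_ge0 ?hist_ge0 ?subr_ge0 ?ltW.
Qed.

Lemma sm_bound x z : sm x z <= (m%:R + 1) * (in_unit_cube z)%:R.
Proof.
rewrite /sm /smoothed_histogram; case: ifP => _; last by rewrite mulr0.
rewrite mulr1; have H1 := hist_le x z; have H0 := hist_ge0 x z.
have H2 : 0 <= delta * histogram N h x z by apply: mulr_ge0; [exact: ltW|].
set H := histogram N h x z in H0 H1 H2 *; set M := (m%:R : R) in H1 *; rewrite mulrBl mul1r; move: H0 H1 H2 d0 d1; clear; move=> *; lra.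
Qed.

Lemma sm_ratio (x y : n.-tuple (r.-tuple R)) z : hamming x y = 1%N ->
  sm x z <= ((1 - delta) * m%:R / (n%:R * delta) + 1) * sm y z.
Proof.
move=> hxy.
have n0 : (0 < n)%N.
  case: n x y hxy => // x y; rewrite /hamming => H.
  by have := max_card [pred i : 'I_0 | tnth x i != tnth y i]; rewrite H card_ord.
have nR : 0 < n%:R :> R by rewrite ltr0n.
rewrite /sm /smoothed_histogram; case: ifP => _; last by rewrite mulr0.
set a := (1 - delta) * m%:R / n%:R.
have a0 : 0 <= a by rewrite /a; apply: divr_ge0; [apply: mulr_ge0; [rewrite subr_ge0; exact: ltW|exact: ler0n]|exact: ler0n].
have -> : (1 - delta) * m%:R / (n%:R * delta) = a / delta.
  by rewrite /a invfM mulrA.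
case: (@hist_cases R r n N h h0 z) => [[c0 [_ Hc]]|H0]; last first.
  rewrite !H0 !mulr0 !add0r mulrDl mul1r divfK ?gt_eqF //; lra.
rewrite !Hc !hval.
have := @count_le R r n N h x y c0 hxy ; rewrite -(ler_nat R) => Hle.
rewrite -addn1 natrD in Hle.
set cx := (bin_count h x c0)%:R in Hle *; set cy := (bin_count h y c0)%:R in Hle *.
have -> : (1 - delta) * (cx / n%:R * m%:R) = a * cx.
  by rewrite /a; field; rewrite gt_eqF.
have -> : (1 - delta) * (cy / n%:R * m%:R) = a * cy.
  by rewrite /a; field; rewrite gt_eqF.
have cy0 : 0 <= cy by rewrite /cy ler0n.
have H3 : 0 <= a / delta * (a * cy).
  by apply: mulr_ge0; [apply: divr_ge0; [exact: a0|exact: ltW]|exact: mulr_ge0].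
have H4 : a * cx <= a * (cy + 1) by apply: ler_wpM2l.
have -> : (a / delta + 1) * (a * cy + delta) = a / delta * (a * cy) + a * cy + a + delta.
  by field; rewrite gt_eqF.
move: H3 H4; clear; move=> *; lra.
Qed.

End smooth.


Section meas.
Context (R : realType) (r : nat).

Lemma meas_boolR d (T : measurableType d) (b : T -> bool) :
  measurable [set z | b z] -> measurable_fun setT (fun z => (b z)%:R : R).
Proof.
move=> mb.
have -> : (fun z => (b z)%:R : R) = \1_[set z | b z].
  apply/funext => z; rewrite indicE; case Hb: (b z).
    by rewrite mem_set.
  by rewrite memNset //= Hb.
exact: measurable_realfun.measurable_indic.
Qed.

Lemma meas_forall (p : 'I_r -> R -> bool) :
  (forall j, measurable [set t | p j t]) ->
  measurable [set z : r.-tuple R | [forall j, p j (tnth z j)]].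
Proof.
move=> mp.
have -> : [set z : r.-tuple R | [forall j, p j (tnth z j)]] =
   \bigcap_(j in [set: 'I_r]) ((fun z : r.-tuple R => tnth z j) @^-1` [set t | p j t]).
  apply/seteqP; split => z /=; first by move=> /forallP h j _; exact: h.
  by move=> h; apply/forallP => j; exact: (h j).
apply: fin_bigcap_measurable; first exact: finite_finset.
move=> j _; rewrite -[X in measurable X]setTI.
exact: (@measurable_tnth _ R r j).
Qed.

Lemma meas_and (p q : R -> bool) : measurable [set t | p t] -> measurable [set t | q t] ->
  measurable [set t | p t && q t].
Proof.
move=> mp mq; have -> : [set t | p t && q t] = [set t | p t] `&` [set t | q t].
  by apply/seteqP; split => t /=; [move=> /andP|move=> [-> ->]].
exact: measurableI.
Qed.

Lemma meas_or (p q : R -> bool) : measurable [set t | p t] -> measurable [set t | q t] ->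
  measurable [set t | p t || q t].
Proof.
move=> mp mq; have -> : [set t | p t || q t] = [set t | p t] `|` [set t | q t].
  by apply/seteqP; split => t /=; [move=> /orP|move=> [->|->] //; rewrite orbT].
exact: measurableU.
Qed.

Lemma meas_ge (a : R) : measurable [set t : R | a <= t].
Proof. by have := measurable_itv (`[a, +oo[)%O; rewrite set_itvE. Qed.

Lemma meas_lt (a : R) : measurable [set t : R | t < a].
Proof. by have := measurable_itv (`]-oo, a[)%O; rewrite set_itvE. Qed.

Lemma meas_le (a : R) : measurable [set t : R | t <= a].
Proof. by have := measurable_itv (`]-oo, a])%O; rewrite set_itvE. Qed.

Lemma meas_eq (a : R) : measurable [set t : R | t == a].
Proof.
have -> : [set t : R | t == a] = [set a] by apply/seteqP; split => t /= /eqP.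
exact: measurable_set1.
Qed.

Lemma meas_cst (b : bool) : measurable [set t : R | b].
Proof.
case: b.
  by have -> : [set t : R | true] = setT by apply/seteqP.
by have -> : [set t : R | false] = set0 by apply/seteqP; split => t.
Qed.

Lemma meas_cube : measurable [set z : r.-tuple R | in_unit_cube z].
Proof.
apply: (@meas_forall (fun j t => (0 <= t) && (t <= 1))) => j.
by apply: meas_and; [exact: meas_ge|exact: meas_le].
Qed.

Lemma meas_bin N (h : R) (c : {ffun 'I_r -> 'I_N}) :
  measurable [set z : r.-tuple R | in_bin h c z].
Proof.
apply: (@meas_forall (fun j t => ((c j)%:R * h <= t) &&
  ((t < (c j).+1%:R * h) || ((val (c j) == N.-1) && (t == 1))))) => j.
apply: meas_and; first exact: meas_ge.
apply: meas_or; first exact: meas_lt.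
by apply: meas_and; [exact: meas_cst|exact: meas_eq].
Qed.

Lemma meas_sm n N (h delta : R) (x : n.-tuple (r.-tuple R)) :
  measurable_fun setT (smoothed_histogram N h delta x).
Proof.
have -> : smoothed_histogram N h delta x = fun z =>
   (in_unit_cube z)%:R * ((1 - delta) * histogram N h x z + delta).
  apply/funext => z; rewrite /smoothed_histogram.
  by case: (in_unit_cube z); rewrite ?mul1r ?mul0r.
apply: measurable_realfun.measurable_funM; first by apply: meas_boolR; exact: meas_cube.
apply: measurable_realfun.measurable_funD; last exact: measurable_cst.
apply: measurable_realfun.measurable_funM; first exact: measurable_cst.
rewrite /histogram; apply: measurable_sum => c.
apply: measurable_realfun.measurable_funM; first exact: measurable_cst.
apply: meas_boolR; exact: meas_bin.
Qed.

End meas.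


Lemma prod_le_scale (R : realType) k (a b : 'I_k -> \bar R) (K : R) :
  0 <= K -> (forall i, (0 <= a i)%E) -> (forall i, (0 <= b i)%E) ->
  (forall i, (a i <= K%:E * b i)%E) ->
  (\prod_(i < k) a i <= (K ^+ k)%:E * \prod_(i < k) b i)%E.
Proof.
elim: k a b => [|k IH] a b K0 a0 b0 ab.
  by rewrite !big_ord0 expr0 mul1e.
rewrite !big_ord_recr /= exprSr EFinM muleACA.
apply: lee_pmul.
- by apply: prode_ge0.
- exact: a0.
- by apply: IH.
- exact: ab.
Qed.

Theorem mainTheorem4 (R : realType) (r n k N m : nat) (h delta alpha : R)
  (lam : {measure set (r.-tuple R) -> \bar R})
  (Q : n.-tuple (r.-tuple R) -> {measure set (k.-tuple (r.-tuple R)) -> \bar R}) :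
  (1 <= r)%N ->
  0 < h < 1 -> h = N%:R^-1 -> m%:R = h ^- r ->
  0 < delta < 1 -> 0 <= alpha ->
  is_lebesgue_tuple lam ->
  (* Q(. | X = x) is the law of k i.i.d. draws from hat f_{m,delta} *)
  (forall x : n.-tuple (r.-tuple R), is_database x ->
    forall B : 'I_k -> set (r.-tuple R), (forall i, measurable (B i)) ->
      Q x [set z | forall i : 'I_k, B i (tnth z i)] =
      (\prod_(i < k)
         \int[lam]_(y in B i) (smoothed_histogram N h delta x y)%:E)%E) ->
  k%:R * ln ((1 - delta) * m%:R / (n%:R * delta) + 1) <= alpha ->
  (* alpha-differential privacy *)
  forall x y : n.-tuple (r.-tuple R), is_database x -> is_database y ->
    hamming x y = 1%N ->
    forall B : set (k.-tuple (r.-tuple R)), measurable B ->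
      (Q x B <= (expR alpha)%:E * Q y B)%E.
Proof.
move=> r1 /andP[h0 h1] hN hm /andP[d0 d1] a0 hlam hQ hK x y dbx dby hxy B mB.
set K := (1 - delta) * m%:R / (n%:R * delta) + 1.
have K1 : 1 <= K.
  rewrite /K lerDr; apply: divr_ge0; last by apply: mulr_ge0; [exact: ler0n|exact: ltW].
  by apply: mulr_ge0; [rewrite subr_ge0; exact: ltW|exact: ler0n].
have K0 : 0 <= K by apply: le_trans K1.
have Kk : K ^+ k <= expR alpha.
  have KE : expR (ln K) = K by apply: lnK; rewrite posrE; apply: lt_le_trans K1.
  by rewrite -{1}KE -expRM_natl ler_expR.
have sm0 (w : n.-tuple (r.-tuple R)) z : (0 <= (smoothed_histogram N h delta w z)%:E)%E.
  by rewrite lee_fin; exact: (sm_ge0 _ _ _ N m h delta h0 hm d0 d1 w z).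
have msm (w : n.-tuple (r.-tuple R)) (D : set (r.-tuple R)) :
    measurable_fun (U:=measurable_realfun.constructive_ereal_extended__canonical__measurable_structure_SigmaRing R) D (EFin \o smoothed_histogram N h delta w).
  have H1 := meas_sm _ _ _ N h delta w.
  have H2 := (measurable_realfun.measurable_EFinP _ _).2 H1.
  move=> mD Y mY; have := H2 measurableT Y mY; rewrite setTI => hY.
  exact: measurableI.
have msmK (w : n.-tuple (r.-tuple R)) (c : R) (D : set (r.-tuple R)) :
    measurable_fun (U:=measurable_realfun.constructive_ereal_extended__canonical__measurable_structure_SigmaRing R) D (fun z => (c%:E * (smoothed_histogram N h delta w z)%:E)%E).
  have H1 : measurable_fun setT (fun z => c * smoothed_histogram N h delta w z).
    apply: measurable_realfun.measurable_funM; first exact: measurable_cst.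
    exact: (meas_sm _ _ _ N h delta w).
  have H2 := (measurable_realfun.measurable_EFinP _ _).2 H1.
  move=> mD Y mY; have := H2 measurableT Y mY; rewrite setTI => hY.
  exact: measurableI.
pose nu := mscale (NngNum (expR_ge0 alpha)) (Q y).
have nuE A : nu A = ((expR alpha)%:E * Q y A)%E by [].
have -> : ((expR alpha)%:E * Q y B)%E = nu B by [].
apply: (rect_ineq _ _ _ _ (Q x) nu) B mB; last first.
  move=> Bs mBs.
  change (Q x [set z | forall i : 'I_k, Bs i (tnth z i)] <=
     (expR alpha)%:E * Q y [set z | forall i : 'I_k, Bs i (tnth z i)])%E.
  rewrite (hQ x dbx Bs mBs) (hQ y dby Bs mBs).
  apply: (@le_trans _ _ ((K ^+ k)%:E * \prod_(i < k)
      \int[lam]_(z in Bs i) (smoothed_histogram N h delta y z)%:E)%E); last first.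
    apply: lee_wpmul2r; first by apply: prode_ge0 => i _; apply: integral_ge0 => z _.
    rewrite lee_fin; exact: Kk.
  apply: prod_le_scale => // i.
  - by apply: integral_ge0 => z _.
  - by apply: integral_ge0 => z _.
  rewrite -(ge0_integralZl_EFin lam (mBs i) (fun z _ => sm0 y z) (msm y _) K0).
  apply: (ge0_le_integral lam (mBs i) (fun z _ => sm0 x z) (msm x _)).
  + exact: msmK.
  + move=> z _; rewrite -EFinM lee_fin.
    exact: (sm_ratio _ _ _ N m h delta h0 hm d0 d1 x y z hxy).
change ((expR alpha)%:E * Q y setT < +oo)%E.
have -> : [set: k.-tuple (r.-tuple R)] =
    [set z | forall i : 'I_k, (fun _ => [set: r.-tuple R]) i (tnth z i)].
  by apply/seteqP; split.
rewrite (hQ y dby (fun _ => [set: r.-tuple R]) (fun _ => measurableT)).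
pose cube := [set z : r.-tuple R | in_unit_cube z].
have mcube : measurable cube by exact: meas_cube.
have cubeE z : (in_unit_cube z)%:R = \1_cube z :> R.
  rewrite indicE; case Hb: (in_unit_cube z); first by rewrite mem_set.
  by rewrite memNset // /cube /= Hb.
have lam1 : lam cube = 1%E.
  have := hlam (fun=> 0) (fun=> 1) (fun=> ler01).
  rewrite big1 => [|j _]; last by rewrite subr0.
  move=> <-; congr (lam _); apply/seteqP; split => z /=.
    by move=> /forallP hh j; exact: hh.
  by move=> hh; apply/forallP => j; exact: hh.
have M0 : 0 <= m%:R + 1 :> R by rewrite addr_ge0 ?ler0n.
have Ib : (\int[lam]_(z in [set: r.-tuple R]) (smoothed_histogram N h delta y z)%:E
     <= (m%:R + 1)%:E * 1)%E.
  have mI : measurable_fun (U:=measurable_realfun.constructive_ereal_extended__canonical__measurable_structure_SigmaRing R) [set: r.-tuple R] (fun z => (\1_cube z)%:E).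
    apply/measurable_realfun.measurable_EFinP.
    exact: measurable_realfun.measurable_indic.
  apply: (@le_trans _ _ (\int[lam]_(z in [set: r.-tuple R]) ((m%:R + 1)%:E * (\1_cube z)%:E))%E).
    apply: (ge0_le_integral lam measurableT (fun z _ => sm0 y z) (msm y _)).
      have H1 : measurable_fun setT (fun z => (m%:R + 1) * \1_cube z :> R).
        apply: measurable_realfun.measurable_funM; first exact: measurable_cst.
        exact: measurable_realfun.measurable_indic.
      exact: ((measurable_realfun.measurable_EFinP _ _).2 H1).
    move=> z _; rewrite -EFinM lee_fin -cubeE.
    exact: (sm_bound _ _ _ N m h delta h0 hm d0 d1 y z).
  have I0 : forall z, [set: r.-tuple R] z -> (0 <= (\1_cube z)%:E :> \bar R)%E.
    by move=> z _; rewrite lee_fin indicE.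
  rewrite (ge0_integralZl_EFin lam measurableT I0 mI M0).
  by rewrite integral_indic // setIT lam1.
have Pb := @prod_le_scale R k (fun i => (\int[lam]_(z in [set: r.-tuple R]) (smoothed_histogram N h delta y z)%:E)%E) (fun=> 1%E) (m%:R + 1) M0
   (fun i => integral_ge0 _ (fun z _ => sm0 y z)) (fun i => lee01) (fun i => Ib).
apply: (@le_lt_trans _ _ ((expR alpha)%:E * ((m%:R + 1) ^+ k)%:E)%E).
  apply: lee_wpmul2l; first by rewrite lee_fin expR_ge0.
  apply: (le_trans Pb); rewrite big1 ?mule1 //.
by rewrite -EFinM ltry.
Qed.
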